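(* Let $A\in\mathbb{R}^{n\times n}$ be a singular positive semi-definite matrix with $\mathrm{rank}(A)=d<n$, and let $u_0\notin\mathrm{range}(A)$. Then for any $\lambda_0>0$, $u_0^\intercal(\lambda_0u_0u_0^\intercal+A)^\dagger u_0=1/\lambda_0$.
   Context: $A^\dagger$ is the Moore–Penrose pseudo-inverse; $\mathrm{range}(A)$ is the column space of $A$. *)

(* Defs.v *)
From HB Require Import structures.
From mathcomp Require Import all_boot all_order all_algebra.
From mathcomp Require Import reals.
From Stdlib Require Import ClassicalEpsilon.
Set Implicit Arguments. Unset Strict Implicit. Unset Printing Implicit Defensive.
Import Order.TTheory GRing.Theory Num.Theory.
Local Open Scope ring_scope.

Definition psd (R : realType) (n : nat) (A : 'M[R]_n) : Prop :=
  A^T = A /\ forall x : 'cV[R]_n, 0 <= (x^T *m A *m x) 0 0.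

Definition in_range (R : realType) (m n : nat) (A : 'M[R]_(m, n)) (u : 'cV[R]_m) : Prop :=
  exists x : 'cV[R]_n, A *m x = u.

Definition is_MP_pinv (R : realType) (m n : nat) (A : 'M[R]_(m, n)) (X : 'M[R]_(n, m)) : Prop :=
  [/\ A *m X *m A = A, X *m A *m X = X, (A *m X)^T = A *m X & (X *m A)^T = X *m A].

Definition mp_pinv (R : realType) (m n : nat) (A : 'M[R]_(m, n)) : 'M[R]_(n, m) :=
  epsilon (inhabits 0) (is_MP_pinv A).

(* Main.v *)
Require Import Defs.
From HB Require Import structures.
From mathcomp Require Import all_boot all_order all_algebra.
From mathcomp Require Import reals.
From Stdlib Require Import ClassicalEpsilon.
Import Order.TTheory GRing.Theory Num.Theory.
Local Open Scope ring_scope.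

Lemma rv_sq_eq0 (R : realFieldType) q (v : 'rV[R]_q) : v *m v^T = 0 -> v = 0.
Proof.
move=> h; have := congr1 (fun M : 'M[R]_1 => M 0 0) h; rewrite !mxE => /eqP.
under eq_bigr do rewrite mxE -expr2.
rewrite psumr_eq0 => [/allP hall|i _]; last exact: sqr_ge0.
apply/rowP => j; rewrite mxE.
by have := hall j (mem_index_enum j); rewrite sqrf_eq0 => /eqP.
Qed.

Lemma gram_unit (R : realFieldType) p q (B : 'M[R]_(p, q)) :
  row_free B -> B *m B^T \in unitmx.
Proof.
move=> fB; rewrite -row_free_unit; apply: inj_row_free => v hv.
have : (v *m B) *m (v *m B)^T = 0 by rewrite trmx_mul !mulmxA -(mulmxA v) hv mul0mx.
move/rv_sq_eq0/eqP; rewrite mulmx_free_eq0 // => /eqP; done.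
Qed.

Lemma pinv_fact (R : realType) m n r (F : 'M[R]_(m, r)) (G : 'M[R]_(r, n)) :
  row_free G -> row_free F^T -> exists X, is_MP_pinv (F *m G) X.
Proof.
move=> fG fF.
have uG : G *m G^T \in unitmx by apply: gram_unit.
have uF : F^T *m F \in unitmx.
  by have := @gram_unit _ _ _ F^T; rewrite trmxK; apply.
set P := invmx (G *m G^T); set Q := invmx (F^T *m F).
exists (G^T *m P *m Q *m F^T).
have e1 : G *m G^T *m P = 1%:M by rewrite mulmxV.
have e2 : Q *m (F^T *m F) = 1%:M by rewrite mulVmx.
have AX : F *m G *m (G^T *m P *m Q *m F^T) = F *m Q *m F^T.
  by rewrite !mulmxA -(mulmxA F G) -(mulmxA F) e1 mulmx1.
have XA : (G^T *m P *m Q *m F^T) *m (F *m G) = G^T *m P *m G.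
  by rewrite !mulmxA -(mulmxA (G^T *m P *m Q) F^T F) -(mulmxA (G^T *m P) Q) e2 mulmx1.
have sP : P^T = P by rewrite /P trmx_inv trmx_mul trmxK.
have sQ : Q^T = Q by rewrite /Q trmx_inv trmx_mul trmxK.
split.
- rewrite AX.
  by rewrite !mulmxA -(mulmxA (F *m Q) F^T F) -(mulmxA F Q) e2 mulmx1.
- rewrite XA.
  by rewrite !mulmxA -(mulmxA (G^T *m P) G G^T) -(mulmxA (G^T *m P) (G *m G^T) P) e1 mulmx1.
- by rewrite AX !trmx_mul trmxK sQ mulmxA.
- by rewrite XA !trmx_mul trmxK sP mulmxA.
Qed.

Lemma pinv_exists (R : realType) m n (A : 'M[R]_(m, n)) :
  exists X, is_MP_pinv A X.
Proof.
rewrite -(mulmx_base A); apply: pinv_fact; first exact: row_base_free.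
by rewrite /row_free mxrank_tr; exact: col_base_full.
Qed.

Theorem lemma10 (R : realType) (n d : nat) (A : 'M[R]_n) (u0 : 'cV[R]_n) (l0 : R)
  (hA : psd A) (hrank : \rank A = d) (hd : (d < n)%N)
  (hu0 : ~ in_range A u0) (hl0 : 0 < l0) :
  u0^T *m mp_pinv (l0 *: (u0 *m u0^T) + A) *m u0 = (l0^-1)%:M.
Proof.
case: hA => hAT _.
set M := l0 *: (u0 *m u0^T) + A.
have hP : is_MP_pinv M (mp_pinv M).
  by rewrite /mp_pinv; apply: epsilon_spec; exact: pinv_exists.
case: hP => hMXM _ _ _.
set X := mp_pinv M.
have hMT : M^T = M by rewrite /M linearD /= linearZ /= trmx_mul trmxK hAT.
have nsub : ~~ (u0^T <= A)%MS.
  apply/negP => /submxP [x hx]; apply: hu0; exists x^T.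
  by rewrite -[u0]trmxK hx trmx_mul hAT.
set C := cokermx A.
have hC : u0^T *m C != 0 by rewrite -submxE.
set w := C *m (u0^T *m C)^T.
have Aw : A *m w = 0 by rewrite /w mulmxA mulmx_coker mul0mx.
set s := (u0^T *m w) 0 0.
have uw : u0^T *m w = s%:M by rewrite [LHS]mx11_scalar.
have s0 : s != 0.
  apply/negP => /eqP s0; move/negP: hC; apply; apply/eqP; apply: rv_sq_eq0.
  rewrite -mulmxA; change (u0^T *m w = 0); by rewrite uw s0 raddf0.
have ls0 : l0 * s != 0 by rewrite mulf_neq0 // gt_eqF.
set v := (l0 * s)^-1 *: w.
have Mv : M *m v = u0.
  rewrite /v -scalemxAr /M mulmxDl Aw addr0 -scalemxAl -mulmxA uw mul_mx_scalar.
  by rewrite scalerA scalerA -mulrA mulVf // scale1r.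
have uT : u0^T = v^T *m M by rewrite -Mv trmx_mul hMT.
have wu : w^T *m u0 = s%:M by rewrite -[u0]trmxK -trmx_mul uw tr_scalar_mx.
have -> : u0^T *m X *m u0 = v^T *m M *m X *m (M *m v) by rewrite -uT Mv.
rewrite !mulmxA -(mulmxA (v^T) M X) -(mulmxA v^T (M *m X) M) hMXM.
rewrite -mulmxA Mv /v linearZ /= -scalemxAl wu scale_scalar_mx.
by congr (_%:M); rewrite invfM mulrAC -mulrA mulfV // mulr1.
Qed.
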